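(* Let $\Sigma=(0,\infty]$, ordered by the usual order $\le$, let $a,b\in\mathbb{N}$ with $a,b>1$ and $c\in\mathbb{R}$ with $c>0$. Fix $z\in\Sigma^{\infty}$ with $l(z)=\infty$ and $z_k\neq\infty$ for all $k\in\omega_b$ with $k\ge2$. Let $$\Sigma_{b,c}^{\infty}:=\{y\in\Sigma^{\infty}: 2\le l(y),\ y_1=c,\ y_k=\infty \text{ for all } k\notin\omega_b \text{ with } 2\le k\le l(y)\}.$$ Define $\Theta_{a,b}^{z}:\Sigma_{b,c}^{\infty}\to\Sigma_{b,c}^{\infty}$ by $\Theta_{a,b}^{z}(x)=x_{\Theta_{a,b}^{z}}$, where $$(x_{\Theta_{a,b}^{z}})_k:=\begin{cases} c & \text{if } k=1,\\ \infty & \text{if } k\notin\omega_b \text{ and } 2\le k\le l(x)+1,\\ a\cdot x_{k/b}+z_k & \text{if } k\in\omega_b \text{ and } k/b\le l(x).\end{cases}$$ Then $\Theta_{a,b}^{z}$ has a unique fixed point $v\in\Sigma_{b,c}^{\infty}$, and $l(v)=\infty$. Moreover, if $u\in\Sigma_{b,c}^{\infty}$ satisfies $\Theta_{a,b}^{z}(u)\sqsubseteq_{sp}u$, then $v\sqsubseteq_{sp}u$.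
   Context: $\mathbb{N}$ is the set of positive integers; $\omega_b=\{b^k:k\in\mathbb{N}\}$. $\Sigma^{\infty}$ is the set of all nonempty finite and infinite words over $\Sigma$; $l(x)\in[1,\infty]$ is the length of $x$ and $x_k$ its $k$-th letter. For $x,y\in\Sigma^\infty$, $x\sqsubseteq_{sp}y$ (''$x$ is a subprefix of $y$'') means there exists $n_0\in\mathbb{N}$ with $n_0\le l(x)$ such that $x_k\le y_k$ for all $k\le n_0$. Arithmetic on $(0,\infty]$ uses the usual conventions with $\infty$. *)

(* Defs.v *)
(* letters of Sigma = (0, +oo] are elements of \bar R. *)
From mathcomp Require Import all_boot all_order all_algebra.
From mathcomp Require Import all_classical all_reals all_analysis.
Set Implicit Arguments. Unset Strict Implicit. Unset Printing Implicit Defensive.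
Import Order.TTheory GRing.Theory Num.Theory.
Local Open Scope ereal_scope.

(* A word over Sigma: a length in [1, oo] (None = oo) and its letters,
   indexed from 1.  Letters at indices outside 1..len are irrelevant. *)
Record word (R : realType) := Word { wlen : option nat ; wlet : nat -> \bar R }.

Definition inlen (l : option nat) (k : nat) : Prop :=
  (1 <= k)%N /\ (match l with Some n => (k <= n)%N | None => True end).

Definition isword (R : realType) (x : word R) : Prop :=
  (match wlen x with Some n => (1 <= n)%N | None => True end) /\
  (forall k, inlen (wlen x) k -> 0 < wlet x k).

Definition weq (R : realType) (x y : word R) : Prop :=
  wlen x = wlen y /\ (forall k, inlen (wlen x) k -> wlet x k = wlet y k).

Definition omegab (b k : nat) : bool :=
  [exists j : 'I_k.+1, (0 < (j : nat))%N && (b ^ j == k)%N].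

Definition Sigma_bc (R : realType) (b : nat) (c : R) (y : word R) : Prop :=
  isword y /\
  (match wlen y with Some n => (2 <= n)%N | None => True end) /\
  wlet y 1 = c%:E /\
  (forall k, ~~ omegab b k -> (2 <= k)%N -> inlen (wlen y) k -> wlet y k = +oo).

(* Its letters are given by the three cases; its length is
   the largest L such that every index 1..L is covered by one of the cases:
   oo if l(x) = oo, and for l(x) = n >= 2 it is n+2 if n+2 \in omega_b and
   n+1 otherwise (indices n+2 resp. n+3 being the first uncovered one). *)
Definition Theta (R : realType) (a b : nat) (c : R) (z : word R) (x : word R)
  : word R :=
  Word (match wlen x with
        | Some n => Some (if omegab b n.+2 then n.+2 else n.+1)
        | None => None end)
       (fun k => if k == 1%N then c%:E
                 else if omegab b k then (a%:R)%:E * wlet x (k %/ b) + wlet z k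
                 else +oo).

(* x is a subprefix of y: exists n0 with 1 <= n0 <= l(x) and x_k <= y_k for
   all 1 <= k <= n0 (the letters y_k must exist, i.e. n0 <= l(y)). *)
Definition subprefix (R : realType) (x y : word R) : Prop :=
  exists n0 : nat, inlen (wlen x) n0 /\ inlen (wlen y) n0 /\
    (forall k, (1 <= k)%N -> (k <= n0)%N -> wlet x k <= wlet y k).

(* Main.v *)
Require Import Defs.
From mathcomp Require Import all_boot all_order all_algebra.
From mathcomp Require Import all_classical all_reals all_analysis.
From mathcomp Require Import zify.
Import Order.TTheory GRing.Theory Num.Theory.
Local Open Scope ereal_scope.

Lemma omegab_ge (b k : nat) : (1 < b)%N -> omegab b k -> (b <= k)%N.
Proof.
move=> b1 /existsP [j /andP [j0 /eqP <-]].
case: (nat_of_ord j) j0 => // n _.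
by rewrite expnS leq_pmulr // expn_gt0 (ltnW b1).
Qed.

Arguments omegab_ge {b k}.
Fixpoint ff (R : realType) (a b : nat) (c : R) (z : word R) (n k : nat) : \bar R :=
  if n is n'.+1 then
    (if k == 1%N then c%:E
     else if omegab b k then (a%:R)%:E * ff R a b c z n' (k %/ b) + wlet z k
     else +oo)
  else +oo.
Arguments ff {R}.

Lemma ff_stab (R : realType) (a b : nat) (c : R) (z : word R) :
  (1 < b)%N -> forall n k, (1 <= k <= n)%N -> ff a b c z n k = ff a b c z n.+1 k.
Proof.
move=> b1; elim=> [|n IH] k; first by case: k => [|[]].
move=> /andP [k1 kn] /=.
case: eqP => // _; case ob: (omegab b k) => //.
have bk := omegab_ge b1 ob.
rewrite IH // divn_gt0 ?(ltnW b1) // bk /=.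
rewrite -ltnS; apply: leq_trans kn; apply: ltn_Pdiv => //.
Qed.

Lemma ff_stab2 (R : realType) (a b : nat) (c : R) (z : word R) :
  (1 < b)%N -> forall n m k, (1 <= k <= n)%N -> (n <= m)%N ->
  ff a b c z n k = ff a b c z m k.
Proof.
move=> b1 n m k hk nm; rewrite -(subnKC nm).
elim: (m - n)%N => [|d IH]; first by rewrite addn0.
rewrite IH addnS ff_stab //.
case/andP: hk => -> h /=; exact: leq_trans h (leq_addr _ _).
Qed.

Definition vw {R : realType} (a b : nat) (c : R) (z : word R) : word R :=
  Word None (fun k => ff a b c z k k).

Lemma vfix (R : realType) (a b : nat) (c : R) (z : word R) :
  (1 < b)%N -> forall k, (1 <= k)%N ->
  wlet (vw a b c z) k = (if k == 1%N then c%:E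
     else if omegab b k then (a%:R)%:E * wlet (vw a b c z) (k %/ b) + wlet z k
     else +oo).
Proof.
move=> b1 [|k] // _ /=.
case: eqP => // _; case ob: (omegab b k.+1) => //.
have bk := omegab_ge b1 ob.
congr (_ * _ + _); symmetry; apply: (@ff_stab2 R a b c z b1 (k.+1 %/ b) k)...
  by rewrite divn_gt0 ?(ltnW b1) // bk /=.
  by rewrite -ltnS ltn_Pdiv.
Qed.

Theorem theorem8 (R : realType) (a b : nat) (c : R) (z : word R) :
  (1 < a)%N -> (1 < b)%N -> (0 < c)%R ->
  isword z -> wlen z = None ->
  (forall k, omegab b k -> (2 <= k)%N -> wlet z k != +oo) ->
  exists v : word R,
    [/\ Sigma_bc b c v,
        weq (Theta a b c z v) v,
        (forall w : word R, Sigma_bc b c w -> weq (Theta a b c z w) w -> weq w v),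
        wlen v = None &
        (forall u : word R, Sigma_bc b c u ->
           subprefix (Theta a b c z u) u -> subprefix v u)].
Proof.
move=> a1 b1 c0 [_ zpos] zlen _.
have a0 : (0 < (a%:R)%:E :> \bar R) by rewrite lte_fin ltr0n ltnW.
have hdiv : forall k, omegab b k -> (1 <= k %/ b)%N /\ (k %/ b < k)%N.
  move=> k ob; have bk := omegab_ge b1 ob.
  split; first by rewrite divn_gt0 ?(ltnW b1).
  by apply: ltn_Pdiv => //; apply: leq_trans bk; apply: ltnW.
have zp : forall k, (1 <= k)%N -> 0 < wlet z k.
  by move=> k k1; apply: zpos; rewrite zlen.
have vpos : forall k, (1 <= k)%N -> 0 < wlet (vw a b c z) k.
  elim/ltn_ind=> k IH k1; rewrite vfix //.
  case: eqP => _; first by rewrite lte_fin.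
  case ob: (omegab b k) => //.
  have [h1 h2] := hdiv k ob.
  by apply: adde_gt0; [apply: mule_gt0 => //; apply: IH | apply: zp].
exists (vw a b c z); split => //.
- split; first by split => // k [k1 _]; apply: vpos.
  split => //; split; first by rewrite vfix.
  move=> k ok k2 _; rewrite vfix ?(ltnW k2) //.
  by rewrite (negPf ok); case: eqP => // ek; rewrite ek in k2.
- split => // k [k1 _]; rewrite vfix //.
- move=> w [_ [_ [w1 wn]]] [wl wk].
  have wN : wlen w = None.
    move: wl; rewrite /=; case: (wlen w) => // n [].
    by case: (omegab b n.+2) => h; lia.
  split=> //.
  rewrite wN => k [k1 _]; move: k k1; elim/ltn_ind => k IH k1.
  rewrite vfix // -wk; last by rewrite /= wN.
  rewrite /=; case: eqP => // _; case ob: (omegab b k) => //.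
  have [h1 h2] := hdiv k ob.
  by rewrite IH.
- move=> u [_ [_ [u1 un]]] [n0 [_ [hu hle]]].
  exists n0; split => //; first by split => //; case: hu.
  split => // k; move: k; elim/ltn_ind => k IH k1 kn.
  have := hle k k1 kn; rewrite vfix // /=.
  case: eqP => ek; first by rewrite ek u1.
  case ob: (omegab b k) => H; last first.
    have k2 : (2 <= k)%N by move: ek k1; clear; case: k => [|[|k]].
    rewrite un ?ob //.
    case: hu => _; case: (wlen u) => // m h; split => //; exact: leq_trans kn h.
  apply: le_trans H; apply: leeD => //.
  have [h1 h2] := hdiv k ob.
  apply: lee_wpmul2l; first exact: ltW.
  apply: IH => //; exact: leq_trans (ltnW h2) kn.
Qed.
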